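(* Let $n\ge1$ and let $\alpha_1,\dots,\alpha_n$ be congruences of a group $(G,\cdot,{}^{-1},1)$. Then $[\alpha_1,\dots,\alpha_n]_{(G,\cdot,{}^{-1},1)}=[\alpha_1,\dots,\alpha_n]_{(G,\cdot)}$, i.e. the commutator computed in the group equals the commutator computed in its semigroup reduct.
   Context: For an algebra $\mathbf A$ and congruences $\alpha_1,\dots,\alpha_n$, $M_{\mathbf A}(\alpha_1,\dots,\alpha_n)$ is the subalgebra of $\mathbf A^{\{0,1\}^n}$ (operations of $\mathbf A$ pointwise) generated by all $g$ such that for some $i$ and $(a,b)\in\alpha_i$, $g(x)=a$ if $x_i=0$ and $g(x)=b$ if $x_i=1$; the commutator $[\alpha_1,\dots,\alpha_n]_{\mathbf A}$ is the smallest congruence $\delta$ of $\mathbf A$ such that for all $f\in M_{\mathbf A}(\alpha_1,\dots,\alpha_n)$: if $(f(x0),f(x1))\in\delta$ for all $x\in\{0,1\}^{n-1}\setminus\{(1,\dots,1)\}$, then $(f(1,\dots,1,0),f(1,\dots,1,1))\in\delta$. *)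

(* Defs.v *)
From mathcomp Require Import all_boot.
Set Implicit Arguments. Unset Strict Implicit. Unset Printing Implicit Defensive.

Record algebra (T : Type) := Algebra {
  op_index : Type;
  arity : op_index -> nat;
  interp : forall o : op_index, ('I_(arity o) -> T) -> T }.

Definition congruence (T : Type) (A : algebra T) (R : T -> T -> Prop) : Prop :=
  [/\ (forall x, R x x), (forall x y, R x y -> R y x),
      (forall x y z, R x y -> R y z -> R x z) &
      (forall (o : op_index A) (a b : 'I_(arity o) -> T),
          (forall j, R (a j) (b j)) -> R (interp a) (interp b))].

Inductive group_op := GMul | GInv | GOne.
Definition group_arity (o : group_op) : nat :=
  match o with GMul => 2 | GInv => 1 | GOne => 0 end.
Definition group_interp (T : Type) (mul : T -> T -> T) (inv : T -> T) (one : T)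
  (o : group_op) : ('I_(group_arity o) -> T) -> T :=
  match o return ('I_(group_arity o) -> T) -> T with
  | GMul => fun a => mul (a ord0) (a ord_max)
  | GInv => fun a => inv (a ord0)
  | GOne => fun _ => one
  end.
Definition group_alg (T : Type) (mul : T -> T -> T) (inv : T -> T) (one : T)
  : algebra T := @Algebra T group_op group_arity (group_interp mul inv one).

Definition semigroup_interp (T : Type) (mul : T -> T -> T) (o : unit)
  : ('I_2 -> T) -> T := fun a => mul (a ord0) (a ord_max).
Definition semigroup_alg (T : Type) (mul : T -> T -> T) : algebra T :=
  @Algebra T unit (fun _ => 2) (semigroup_interp mul).

(* M_A(alpha_1,...,alpha_n): the subalgebra of A^({0,1}^n) generated by the
   functions x |-> (if x_i = 0 then a else b) with (a,b) in alpha_i.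
   Elements of {0,1}^n are functions 'I_n -> bool (false = 0, true = 1). *)
Inductive inM (T : Type) (A : algebra T) (n : nat)
    (alphas : 'I_n -> T -> T -> Prop) : ((('I_n -> bool) -> T) -> Prop) :=
| M_gen (f : ('I_n -> bool) -> T) (i : 'I_n) (a b : T) :
    alphas i a b -> (forall x, f x = if x i then b else a) -> inM A alphas f
| M_op (f : ('I_n -> bool) -> T) (o : op_index A)
    (g : 'I_(arity o) -> (('I_n -> bool) -> T)) :
    (forall j, inM A alphas (g j)) ->
    (forall x, f x = interp (fun j => g j x)) -> inM A alphas f.

(* For x in {0,1}^(n-1) and b in {0,1}, ext x b is the tuple "x b" in {0,1}^n
   (b placed in the last coordinate). *)
Definition ext (n : nat) (x : 'I_n.-1 -> bool) (b : bool) : 'I_n -> bool :=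
  fun i => match (insub (nat_of_ord i) : option 'I_n.-1) with
           | Some j => x j
           | None => b
           end.

(* delta satisfies the term condition for M_A(alpha_1,...,alpha_n). *)
Definition comm_closed (T : Type) (A : algebra T) (n : nat)
    (alphas : 'I_n -> T -> T -> Prop) (d : T -> T -> Prop) : Prop :=
  forall f, inM A alphas f ->
    (forall x : 'I_n.-1 -> bool, ~ (forall j, x j = true) ->
        d (f (ext x false)) (f (ext x true))) ->
    d (f (ext (fun _ => true) false)) (f (ext (fun _ => true) true)).

Definition commutator (T : Type) (A : algebra T) (n : nat)
    (alphas : 'I_n -> T -> T -> Prop) (x y : T) : Prop :=
  forall d, congruence A d -> comm_closed A alphas d -> d x y.

(* Main.v *)
Require Import Defs.
From mathcomp Require Import all_boot.

Set Implicit Arguments.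
Section S.
Variables (T : Type) (mul : T -> T -> T) (inv : T -> T) (one : T).
Hypotheses (mulA : forall x y z, mul x (mul y z) = mul (mul x y) z)
  (mul1g : forall x, mul one x = x) (mulg1 : forall x, mul x one = x)
  (mulVg : forall x, mul (inv x) x = one) (mulgV : forall x, mul x (inv x) = one).

Lemma invM x y : inv (mul x y) = mul (inv y) (inv x).
Proof.
have H : mul (mul x y) (mul (inv y) (inv x)) = one.
  by rewrite -mulA (mulA y) mulgV mul1g mulgV.
by rewrite -[LHS]mulg1 -H mulA mulVg mul1g.
Qed.

Lemma invK x : inv (inv x) = x.
Proof. by rewrite -[LHS]mulg1 -(mulVg x) mulA mulVg mul1g. Qed.

Lemma inv1 : inv one = one.
Proof. by rewrite -[LHS]mul1g mulgV. Qed.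

Definition pair2 (u v : T) : 'I_2 -> T := fun j => if nat_of_ord j == 0 then u else v.

Lemma semi_mul d : congruence (semigroup_alg mul) d ->
  forall a b c e, d a b -> d c e -> d (mul a c) (mul b e).
Proof.
case=> _ _ _ Hc a b c e Hab Hce.
have := Hc tt (pair2 a c) (pair2 b e).
apply => j; rewrite /pair2; by case: (nat_of_ord j == 0).
Qed.

Lemma semi_group d : congruence (semigroup_alg mul) d ->
  congruence (group_alg mul inv one) d.
Proof.
move=> Hd; have Hm := semi_mul Hd.
case: Hd => Hr Hs Ht _; split => // -[] a b Hab /=.
- by apply: (Hm).
- set x := a ord0; set y := b ord0.
  have hxy : d x y by apply: Hab.
  suff : d (mul (inv x) (mul y (inv y))) (mul (inv x) (mul x (inv y))).
    by rewrite mulgV mulg1 mulA mulVg mul1g.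
  apply: (Hm); [apply: Hr | apply: (Hm); [exact: Hs | apply: Hr]].
- exact: Hr.
Qed.

Lemma group_semi d : congruence (group_alg mul inv one) d ->
  congruence (semigroup_alg mul) d.
Proof.
case=> Hr Hs Ht Hc; split => // -[] a b Hab /=.
exact: (Hc GMul a b Hab).
Qed.

Variables (n : nat) (hn : 1 <= n) (alphas : 'I_n -> T -> T -> Prop)
  (halphas : forall i, congruence (group_alg mul inv one) (alphas i)).

Lemma inM_ext (A : algebra T) f f' : inM A alphas f -> (forall x, f x = f' x) ->
  inM A alphas f'.
Proof.
case=> [f0 i a b Hab Hf | f0 o g Hg Hf] He.
- apply: (M_gen _ Hab) => x; by rewrite -He Hf.
- apply: (M_op Hg) => x; by rewrite -He Hf.
Qed.

Lemma semi_to_group f : inM (semigroup_alg mul) alphas f ->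
  inM (group_alg mul inv one) alphas f.
Proof.
elim=> [f0 i a b Hab Hf | f0 o g Hg IH Hf].
- exact: (M_gen _ Hab Hf).
- exact: (@M_op _ (group_alg mul inv one) _ _ _ GMul g IH Hf).
Qed.

Lemma group_to_semi f : inM (group_alg mul inv one) alphas f ->
  inM (semigroup_alg mul) alphas f /\
  inM (semigroup_alg mul) alphas (fun x => inv (f x)).
Proof.
elim=> [f0 i a b Hab Hf | f0 o g Hg IH Hf].
- split; first exact: (M_gen _ Hab Hf).
  have Hi : alphas i (inv a) (inv b).
    case: (halphas i) => _ _ _ Hc.
    exact: (Hc GInv (fun _ => a) (fun _ => b) (fun _ => Hab)).
  apply: (M_gen _ Hi) => x; rewrite Hf; by case: (x i).
- case: o g Hg IH Hf => g Hg IH Hf /=.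
  + split; first exact: (@M_op _ (semigroup_alg mul) _ _ _ tt g (fun j => (IH j).1) Hf).
    apply: (@M_op _ (semigroup_alg mul) _ _ _ tt (fun j : 'I_2 => if nat_of_ord j == 0
        then (fun x => inv (g ord_max x)) else (fun x => inv (g ord0 x)))).
    * move=> j; case: (nat_of_ord j == 0); [exact: (IH _).2 | exact: (IH _).2].
    * by move=> x; rewrite Hf /= invM.
  + split; first exact: (inM_ext _ (IH ord0).2 (fun x => esym (Hf x))).
    apply: (inM_ext _ (IH ord0).1) => x; by rewrite Hf /= invK.
  + have i0 : 'I_n := Ordinal hn.
    have H1 : alphas i0 one one by case: (halphas i0).
    by split; apply: (M_gen _ H1) => x; rewrite Hf /= ?inv1; case: (x i0).
Qed.

End S.

Theorem lemma2p3 (T : Type) (mul : T -> T -> T) (inv : T -> T) (one : T)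
  (mulA : forall x y z, mul x (mul y z) = mul (mul x y) z)
  (mul1g : forall x, mul one x = x) (mulg1 : forall x, mul x one = x)
  (mulVg : forall x, mul (inv x) x = one) (mulgV : forall x, mul x (inv x) = one)
  (n : nat) (hn : 1 <= n) (alphas : 'I_n -> T -> T -> Prop)
  (halphas : forall i, congruence (group_alg mul inv one) (alphas i)) :
  forall x y : T,
    commutator (group_alg mul inv one) alphas x y <->
    commutator (semigroup_alg mul) alphas x y.
Proof.
move=> x y; split => H d Hd Hcl.
- apply: H; first by apply: semi_group.
  move=> f Hf; apply: Hcl.
  have Hg : inM (semigroup_alg mul) alphas f /\ inM (semigroup_alg mul) alphas (fun x => inv (f x)) by apply: group_to_semi.
  exact: Hg.1.
- apply: H; first exact: (group_semi Hd).
  move=> f Hf; apply: Hcl; exact: semi_to_group.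
Qed.
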